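(* Let $G\ne1$ be a finitely generated group in $\mathrm{Q}(\mathrm{PLO})$. Then there exists a normal subgroup $H\ne 1$ of $G$ such that whenever $A,B$ are finitely generated subgroups of $H$, there exists $g\in G$ such that $A^g$ and $B$ centralize each other.
   Context: $\mathrm{PLO}$ is the class of groups isomorphic to a subgroup of $\mathcal{P}$, the group of piecewise linear orientation preserving self-homeomorphisms of $[0,1]$. $\mathrm{Q}(\mathrm{PLO})$ is the class of groups isomorphic to a quotient of a $\mathrm{PLO}$-group. $A^g=gAg^{-1}$. *)

(* Defs.v *)
From Stdlib Require Import Reals List.
Open Scope R_scope.

Record Grp : Type := {
  carrier :> Type;
  gmul : carrier -> carrier -> carrier;
  ginv : carrier -> carrier;
  gone : carrier;
  gmul_assoc : forall a b c, gmul a (gmul b c) = gmul (gmul a b) c;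
  gmul_1l : forall a, gmul gone a = a;
  gmul_1r : forall a, gmul a gone = a;
  gmul_Vl : forall a, gmul (ginv a) a = gone;
  gmul_Vr : forall a, gmul a (ginv a) = gone
}.
Arguments gmul {_} _ _.
Arguments ginv {_} _.
Arguments gone {_}.

Definition is_subgroup (G : Grp) (S : G -> Prop) : Prop :=
  S gone /\ (forall a b, S a -> S b -> S (gmul a b)) /\ (forall a, S a -> S (ginv a)).

Definition in_gen (G : Grp) (X : G -> Prop) (g : G) : Prop :=
  forall S, is_subgroup G S -> (forall x, X x -> S x) -> S g.

Definition fin_gen_group (G : Grp) : Prop :=
  exists l : list G, forall g : G, in_gen G (fun x => In x l) g.

Definition fin_gen_subgroup (G : Grp) (A : G -> Prop) : Prop :=
  exists l : list G, forall g : G, A g <-> in_gen G (fun x => In x l) g.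

Definition is_normal (G : Grp) (H : G -> Prop) : Prop :=
  is_subgroup G H /\ forall g h, H h -> H (gmul (gmul g h) (ginv g)).

Definition is_hom (G K : Grp) (f : G -> K) : Prop :=
  forall a b, f (gmul a b) = gmul (f a) (f b).

(** Elements of P: piecewise linear orientation preserving homeomorphisms
    of [0,1] (only the values on [0,1] are relevant). *)
Definition PL_homeo01 (f : R -> R) : Prop :=
  f 0 = 0 /\ f 1 = 1 /\
  (forall x y, 0 <= x -> x < y -> y <= 1 -> f x < f y) /\
  exists (n : nat) (t : nat -> R),
    t O = 0 /\ t n = 1 /\ (forall i, (i < n)%nat -> t i < t (S i)) /\
    (forall i, (i < n)%nat -> exists a b : R,
        forall x, t i <= x <= t (S i) -> f x = a * x + b).

(** K is in PLO: an injective homomorphism of K into P (group law of P is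
    composition; maps are compared on [0,1]). *)
Definition PLO_embedding (K : Grp) (iota : K -> R -> R) : Prop :=
  (forall k, PL_homeo01 (iota k)) /\
  (forall a b x, 0 <= x <= 1 -> iota (gmul a b) x = iota a (iota b x)) /\
  (forall a b, (forall x, 0 <= x <= 1 -> iota a x = iota b x) -> a = b).

Definition in_PLO (K : Grp) : Prop := exists iota, PLO_embedding K iota.

(** G in Q(PLO): G is a quotient (surjective homomorphic image) of a PLO group. *)
Definition in_QPLO (G : Grp) : Prop :=
  exists (K : Grp) (pi : K -> G),
    in_PLO K /\ is_hom K G pi /\ (forall g, exists k, pi k = g).

Definition conj_centralize (G : Grp) (g : G) (A B : G -> Prop) : Prop :=
  forall a b, A a -> B b ->
    gmul (gmul (gmul g a) (ginv g)) b = gmul b (gmul (gmul g a) (ginv g)).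

(* Main.v *)
Require Import Defs.
From Stdlib Require Import Reals List Lra Lia Classical Arith.

Module A.
Import Defs.
Open Scope R_scope.
Open Scope R_scope.

Section S.
Context (K : Grp) (iota : K -> R -> R) (HE : PLO_embedding K iota).

Lemma i_smono k x y : 0 <= x -> x < y -> y <= 1 -> iota k x < iota k y.
Proof. destruct HE as [H _]. destruct (H k) as [_ [_ [Hm _]]]. auto. Qed.

Lemma i_mono k x y : 0 <= x -> x <= y -> y <= 1 -> iota k x <= iota k y.
Proof. intros. destruct (Req_dec x y). subst; lra. left; apply i_smono; lra. Qed.

Lemma i_0 k : iota k 0 = 0.
Proof. destruct HE as [H _]. destruct (H k) as [h _]. auto. Qed.
Lemma i_1 k : iota k 1 = 1.
Proof. destruct HE as [H _]. destruct (H k) as [_ [h _]]. auto. Qed.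

Lemma i_range k x : 0 <= x <= 1 -> 0 <= iota k x <= 1.
Proof. intros. rewrite <- (i_0 k), <- (i_1 k). split; apply i_mono; lra. Qed.

Lemma i_mul a b x : 0 <= x <= 1 -> iota (gmul a b) x = iota a (iota b x).
Proof. destruct HE as [_ [H _]]. auto. Qed.

Lemma i_inj k x y : 0 <= x <= 1 -> 0 <= y <= 1 -> iota k x = iota k y -> x = y.
Proof. intros. destruct (Rtotal_order x y) as [h|[h|h]]; auto.
 - pose proof (i_smono k x y); lra.
 - pose proof (i_smono k y x); lra. Qed.

Lemma i_one x : 0 <= x <= 1 -> iota gone x = x.
Proof. intros. apply (i_inj gone). apply i_range; auto. auto.
 rewrite <- i_mul by auto. rewrite gmul_1l. auto. Qed.

Lemma i_invl k x : 0 <= x <= 1 -> iota (ginv k) (iota k x) = x.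
Proof. intros. rewrite <- i_mul by auto. rewrite gmul_Vl. apply i_one; auto. Qed.
Lemma i_invr k x : 0 <= x <= 1 -> iota k (iota (ginv k) x) = x.
Proof. intros. rewrite <- i_mul by auto. rewrite gmul_Vr. apply i_one; auto. Qed.

Lemma i_ext a b : (forall x, 0 <= x <= 1 -> iota a x = iota b x) -> a = b.
Proof. destruct HE as [_ [_ H]]. auto. Qed.

End S.

End A.
Import A.

Module B.
Import Defs.
Open Scope R_scope.
Open Scope R_scope.

Section S.
Context (K : Grp) (iota : K -> R -> R) (HE : PLO_embedding K iota).

Definition Fx z := forall k : K, iota k z = z.
Definition comp p y := 0 <= y <= 1 /\ forall z, (p <= z <= y \/ y <= z <= p) -> ~ Fx z.

Lemma Fx0 : Fx 0. Proof. intro k. apply (i_0 K iota HE). Qed.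
Lemma Fx1 : Fx 1. Proof. intro k. apply (i_1 K iota HE). Qed.

Lemma comp_pp p y : comp p y -> comp p p.
Proof. intros [Hy H]. split.
 - split.
   + destruct (Rle_dec 0 p); auto. exfalso. apply (H 0); [lra| apply Fx0].
   + destruct (Rle_dec p 1); auto. exfalso. apply (H 1); [lra| apply Fx1].
 - intros z Hz. assert (z = p) by lra. subst. apply H. lra. Qed.

Lemma comp_nfx p y : comp p y -> ~ Fx y.
Proof. intros [_ H]. apply H. lra. Qed.

Lemma L_between y k z : 0 <= y <= 1 -> ~ Fx y -> (y <= z <= iota k y \/ iota k y <= z <= y) -> ~ Fx z.
Proof. intros Hy Hn Hz Fz. pose proof (i_range K iota HE k y Hy).
 assert (Hz1 : 0 <= z <= 1) by lra.
 destruct Hz as [Hz|Hz].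
 - pose proof (i_mono K iota HE k y z ltac:(lra) ltac:(lra) ltac:(lra)). rewrite (Fz k) in H0.
   assert (iota k y = iota k z) by (rewrite (Fz k); lra).
   apply (i_inj K iota HE) in H1; auto. subst. auto.
 - pose proof (i_mono K iota HE k z y ltac:(lra) ltac:(lra) ltac:(lra)). rewrite (Fz k) in H0.
   assert (iota k y = iota k z) by (rewrite (Fz k); lra).
   apply (i_inj K iota HE) in H1; auto. subst. auto. Qed.

Lemma comp_inv p y k : comp p y -> comp p (iota k y).
Proof. intros Hc. pose proof Hc as [Hy H]. split. apply (i_range K iota HE); auto.
 intros z Hz. destruct (classic (p <= z <= y \/ y <= z <= p)) as [h|h]. apply H; auto.
 apply (L_between y k); auto. apply (comp_nfx p); auto.
 destruct Hz as [Hz|Hz].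
 - left. destruct (Rle_dec z y). exfalso; apply h; left; lra. lra.
 - right. destruct (Rle_dec y z). exfalso; apply h; right; lra. lra.
Qed.

Lemma comp_conv p c d z : comp p c -> comp p d -> c <= z <= d -> comp p z.
Proof. intros [Hc H1] [Hd H2] Hz. split. lra. intros w Hw.
 destruct (Rle_dec p w), (Rle_dec w c), (Rle_dec w d), (Rle_dec c w);
 first [ apply H1; ((left; lra) || (right; lra)) | apply H2; ((left; lra) || (right; lra)) | lra ].
Qed.

Lemma comp_inv' p y k : 0 <= y <= 1 -> comp p (iota k y) -> comp p y.
Proof. intros Hy H. apply (comp_inv p _ (ginv k)) in H. rewrite (i_invl K iota HE) in H; auto. Qed.

End S.

End B.
Import B.

Module C.
Import Defs.
Open Scope R_scope.
Open Scope R_scope.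

Section S.
Context (K : Grp) (iota : K -> R -> R) (HE : PLO_embedding K iota).
Notation comp := (B.comp K iota).
Notation Fx := (B.Fx K iota).

Definition Cp (k : K) := forall p, comp p p -> exists c d, comp p c /\ comp p d /\
  forall x, comp p x -> iota k x <> x -> c <= x <= d.

Lemma comp_01 p x : comp p x -> 0 <= x <= 1.
Proof. intros [h _]; auto. Qed.

Lemma Cp_one : Cp gone.
Proof. intros p Hp. exists p, p. split; auto. split; auto. intros x Hx Hn.
 exfalso. apply Hn. apply (i_one K iota HE). apply (comp_01 p); auto. Qed.

Lemma Cp_mul a b : Cp a -> Cp b -> Cp (gmul a b).
Proof. intros Ha Hb p Hp. destruct (Ha p Hp) as [c1 [d1 [Hc1 [Hd1 H1]]]].
 destruct (Hb p Hp) as [c2 [d2 [Hc2 [Hd2 H2]]]].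
 exists (Rmin c1 c2), (Rmax d1 d2). split. unfold Rmin; destruct (Rle_dec c1 c2); auto.
 split. unfold Rmax; destruct (Rle_dec d1 d2); auto.
 intros x Hx Hn. rewrite (i_mul K iota HE) in Hn by (apply (comp_01 p); auto).
 destruct (Req_dec (iota b x) x) as [e|e].
 - rewrite e in Hn. specialize (H1 x Hx Hn). pose proof (Rmin_l c1 c2). pose proof (Rmax_l d1 d2). lra.
 - specialize (H2 x Hx e). pose proof (Rmin_r c1 c2). pose proof (Rmax_r d1 d2). lra.
Qed.

Lemma Cp_inv a : Cp a -> Cp (ginv a).
Proof. intros Ha p Hp. destruct (Ha p Hp) as [c [d [Hc [Hd H]]]].
 exists c, d. split; auto. split; auto. intros x Hx Hn.
 pose proof (comp_01 p x Hx) as Hx01.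
 assert (Hax : iota a x <> x).
 { intro e. apply Hn. rewrite <- e at 1. rewrite (i_invl K iota HE); auto. }
 apply H; auto. Qed.

Lemma Cp_conj g a : Cp a -> Cp (gmul (gmul g a) (ginv g)).
Proof. intros Ha p Hp. destruct (Ha p Hp) as [c [d [Hc [Hd H]]]].
 exists (iota g c), (iota g d). split. apply (comp_inv K iota HE); auto. split. apply (comp_inv K iota HE); auto.
 intros x Hx Hn. pose proof (comp_01 p x Hx) as Hx01.
 set (y := iota (ginv g) x).
 assert (Hy01 : 0 <= y <= 1) by (apply (i_range K iota HE); auto).
 assert (Hxy : x = iota g y) by (unfold y; rewrite (i_invr K iota HE); auto).
 rewrite !(i_mul K iota HE) in Hn by (auto; apply (i_range K iota HE); auto).
 fold y in Hn. rewrite Hxy in Hn.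
 assert (iota a y <> y). { intro e. rewrite e in Hn. auto. }
 assert (comp p y) by (unfold y; apply (comp_inv K iota HE); auto).
 destruct (H y H1 H0). pose proof (comp_01 p c Hc). pose proof (comp_01 p d Hd).
 rewrite Hxy. split; apply (i_mono K iota HE); lra. Qed.

Lemma displace p c d : comp p c -> comp p d -> c <= d -> exists g, d < iota g c.
Proof. intros Hc Hd Hcd. apply NNPP. intro Hno.
 assert (Hle : forall g, iota g c <= d).
 { intro g. apply Rnot_lt_le. intro. apply Hno. exists g; auto. }
 pose proof (comp_01 p c Hc) as Hc01. pose proof (comp_01 p d Hd) as Hd01.
 set (E := fun y => exists g, y = iota g c).
 destruct (completeness E) as [s [Hub Hlub]].
 { exists 1. intros y [g ->]. apply (i_range K iota HE); auto. }
 { exists c. exists gone. rewrite (i_one K iota HE); auto. }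
 assert (Hcs : c <= s). { apply Hub. exists gone. rewrite (i_one K iota HE); auto. }
 assert (Hsd : s <= d). { apply Hlub. intros y [g ->]. auto. }
 assert (Hs01 : 0 <= s <= 1) by lra.
 assert (Hup : forall k, s <= iota k s).
 { intro k. apply Hlub. intros y [g ->].
   rewrite <- (i_invr K iota HE k (iota g c)) by (apply (i_range K iota HE); auto).
   rewrite <- (i_mul K iota HE (ginv k) g c) by auto.
   assert (E1 : E (iota (gmul (ginv k) g) c)) by (exists (gmul (ginv k) g); auto).
   pose proof (Hub _ E1). pose proof (i_range K iota HE (gmul (ginv k) g) c Hc01).
   apply (i_mono K iota HE); lra. }
 assert (HF : Fx s).
 { intro k. pose proof (Hup k). pose proof (Hup (ginv k)).
   pose proof (i_mono K iota HE k s (iota (ginv k) s) ltac:(lra) H0 ltac:(apply (i_range K iota HE); auto)).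
   rewrite (i_invr K iota HE) in H1 by auto. lra. }
 apply (comp_nfx K iota p s). apply (comp_conv K iota p c d s); auto. auto. Qed.

End S.

End C.
Import C.

Module D.
Import Defs.
Open Scope R_scope.
Open Scope R_scope.

Lemma div_le a u e : 0 < a -> u <= a * e -> u / a <= e.
Proof. intros. assert (u / a * a = u) by (field; lra).
 destruct (Rle_dec (u/a) e); auto. exfalso. nra. Qed.
Lemma div_ge0 a u : 0 < a -> 0 <= u -> 0 <= u / a.
Proof. intros. unfold Rdiv. apply Rmult_le_pos; auto. left; apply Rinv_0_lt_compat; auto. Qed.

Lemma piece_right (n : nat) (t : nat -> R) : t O = 0 -> t n = 1 -> (forall i, (i < n)%nat -> t i < t (S i)) ->
  forall x, 0 <= x < 1 -> exists i, (i < n)%nat /\ t i <= x < t (S i).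
Proof. intros H0 Hn Hi x Hx.
 assert (forall m, (m <= n)%nat -> x < t m -> exists i, (i < m)%nat /\ t i <= x < t (S i)).
 { induction m; intros Hm Hxm. lra.
   destruct (Rlt_dec x (t m)). destruct IHm as [i [? ?]]; try lia; auto. exists i; split; auto; lia.
   exists m. split. lia. lra. }
 destruct (H n) as [i [? ?]]; auto. lra. exists i; auto. Qed.

Lemma piece_left (n : nat) (t : nat -> R) : t O = 0 -> t n = 1 -> (forall i, (i < n)%nat -> t i < t (S i)) ->
  forall x, 0 < x <= 1 -> exists i, (i < n)%nat /\ t i < x <= t (S i).
Proof. intros H0 Hn Hi x Hx.
 assert (forall m, (m <= n)%nat -> x <= t m -> exists i, (i < m)%nat /\ t i < x <= t (S i)).
 { induction m; intros Hm Hxm. lra.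
   destruct (Rle_dec x (t m)). destruct IHm as [i [? ?]]; try lia; auto. exists i; split; auto; lia.
   exists m. split. lia. lra. }
 destruct (H n) as [i [? ?]]; auto. lra. exists i; auto. Qed.

Lemma piece_any (n : nat) (t : nat -> R) : t O = 0 -> t n = 1 -> (forall i, (i < n)%nat -> t i < t (S i)) ->
  forall x, 0 <= x <= 1 -> exists i, (i < n)%nat /\ t i <= x <= t (S i).
Proof. intros H0 Hn Hi x Hx. destruct (Req_dec x 1).
 - destruct (piece_left n t H0 Hn Hi x) as [i [? ?]]. lra. exists i; split; auto; lra.
 - destruct (piece_right n t H0 Hn Hi x) as [i [? ?]]. lra. exists i; split; auto; lra. Qed.

Section S.
Context (K : Grp) (iota : K -> R -> R) (HE : PLO_embedding K iota).
Notation comp := (B.comp K iota).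
Notation Fx := (B.Fx K iota).

Lemma cover k : exists P : list R, forall x, 0 <= x <= 1 -> iota k x <> x -> exists p, In p P /\ comp p x.
Proof. destruct HE as [HP _]. destruct (HP k) as [_ [_ [_ [n [t [H0 [Hn [Hi Ha]]]]]]]].
 exists (map t (seq 0 (S n))). intros x Hx Hne.
 destruct (piece_any n t H0 Hn Hi x Hx) as [i [Hin Hti]].
 destruct (Ha i Hin) as [al [be Hab]].
 assert (Hint : forall j, (j <= n)%nat -> In (t j) (map t (seq 0 (S n)))).
 { intros j Hj. apply in_map. apply in_seq. lia. }
 assert (Hnz : forall z, t i <= z <= t (S i) -> iota k z <> z -> ~ Fx z).
 { intros z _ hz F. apply hz. apply F. }
 destruct (classic (exists u, t i <= u <= x /\ iota k u = u)) as [[u [Hu Hu2]]|Hl].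
 - destruct (classic (exists v, x <= v <= t (S i) /\ iota k v = v)) as [[v [Hv Hv2]]|Hr].
   + exfalso. rewrite Hab in Hu2 by lra. rewrite Hab in Hv2 by lra. rewrite Hab in Hne by lra.
     assert (u <> x) by (intro; subst; lra). assert (v <> x) by (intro; subst; lra).
     assert (Hm : (al - 1) * (v - u) = 0) by lra.
     apply Rmult_integral in Hm. destruct Hm. assert (al = 1) by lra. subst. apply Hne. lra. lra.
   + exists (t (S i)). split. apply Hint; lia. split; auto. intros z Hz F.
     apply Hr. exists z. split. lra. apply F.
 - exists (t i). split. apply Hint; lia. split; auto. intros z Hz F.
   apply Hl. exists z. split. lra. apply F. Qed.

Definition Germ k a s := exists al ep, 0 < al /\ 0 < ep /\ forall u, 0 <= u <= ep ->
  0 <= a + s * u <= 1 /\ iota k (a + s * u) = a + s * (al * u).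

Lemma germ_right k a : Fx a -> 0 <= a < 1 -> Germ k a 1.
Proof. intros Fa Ha. destruct HE as [HP _]. destruct (HP k) as [_ [_ [_ [n [t [H0 [Hn [Hi Hf]]]]]]]].
 destruct (piece_right n t H0 Hn Hi a Ha) as [i [Hin Hti]].
 destruct (Hf i Hin) as [al [be Hab]].
 set (ep := Rmin (t (S i)) 1 - a).
 assert (Hep : 0 < ep). { unfold ep, Rmin; destruct (Rle_dec (t (S i)) 1); lra. }
 assert (Hep2 : a + ep <= t (S i) /\ a + ep <= 1). { unfold ep. pose proof (Rmin_l (t (S i)) 1). pose proof (Rmin_r (t (S i)) 1). lra. }
 assert (Hfa : iota k a = a) by apply Fa.
 rewrite Hab in Hfa by lra.
 pose proof (i_smono K iota HE k a (a + ep) ltac:(lra) ltac:(lra) ltac:(lra)).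
 rewrite !Hab in H by lra.
 assert (Hal : 0 < al) by nra.
 exists al, ep. split; auto. split; auto. intros u Hu. split. lra.
 rewrite Hab by lra. lra. Qed.

Lemma germ_left k a : Fx a -> 0 < a <= 1 -> Germ k a (-1).
Proof. intros Fa Ha. destruct HE as [HP _]. destruct (HP k) as [_ [_ [_ [n [t [H0 [Hn [Hi Hf]]]]]]]].
 destruct (piece_left n t H0 Hn Hi a Ha) as [i [Hin Hti]].
 destruct (Hf i Hin) as [al [be Hab]].
 set (ep := a - Rmax (t i) 0).
 assert (Hep : 0 < ep). { unfold ep, Rmax; destruct (Rle_dec (t i) 0); lra. }
 assert (Hep2 : t i <= a - ep /\ 0 <= a - ep). { unfold ep. pose proof (Rmax_l (t i) 0). pose proof (Rmax_r (t i) 0). lra. }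
 assert (Hfa : iota k a = a) by apply Fa.
 rewrite Hab in Hfa by lra.
 pose proof (i_smono K iota HE k (a - ep) a ltac:(lra) ltac:(lra) ltac:(lra)).
 rewrite !Hab in H by lra.
 assert (Hal : 0 < al) by nra.
 exists al, ep. split; auto. split; auto. intros u Hu. split. lra.
 rewrite Hab by lra. lra. Qed.

Lemma germ_inv k a s : (s = 1 \/ s = -1) -> Germ k a s -> exists al ep, 0 < al /\ 0 < ep /\
  (forall u, 0 <= u <= ep -> 0 <= a + s * u <= 1 /\ iota k (a + s * u) = a + s * (al * u)) /\
  (forall v, 0 <= v <= al * ep -> iota (ginv k) (a + s * v) = a + s * (v / al)).
Proof. intros Hs [al [ep [Hal [Hep H]]]]. exists al, ep. split; auto. split; auto. split; auto.
 intros v Hv. set (w := v / al).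
 assert (Hw : 0 <= w <= ep). { unfold w. split. apply div_ge0; lra. apply div_le; lra. }
 destruct (H w Hw) as [H1 H2].
 assert (al * w = v) by (unfold w; field; lra). rewrite H0 in H2. rewrite <- H2.
 apply (i_invl K iota HE). auto. Qed.

Lemma e_eval k1 k2 x : 0 <= x <= 1 ->
  iota (gmul (gmul (gmul k1 k2) (ginv k1)) (ginv k2)) x =
  iota k1 (iota k2 (iota (ginv k1) (iota (ginv k2) x))).
Proof. intros Hx. pose proof (i_range K iota HE (ginv k2) x Hx).
 pose proof (i_range K iota HE (ginv k1) _ H).
 rewrite (i_mul K iota HE) by auto. rewrite (i_mul K iota HE) by auto. rewrite (i_mul K iota HE) by auto. auto. Qed.

Lemma comm_germ k1 k2 a s : (s = 1 \/ s = -1) -> Germ k1 a s -> Germ k2 a s ->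
  exists d, 0 < d /\ forall u, 0 <= u <= d ->
   iota (gmul (gmul (gmul k1 k2) (ginv k1)) (ginv k2)) (a + s * u) = a + s * u.
Proof. intros Hs G1 G2.
 destruct (germ_inv k1 a s Hs G1) as [a1 [e1 [Ha1 [He1 [F1 I1]]]]].
 destruct (germ_inv k2 a s Hs G2) as [a2 [e2 [Ha2 [He2 [F2 I2]]]]].
 exists (Rmin (Rmin (a2 * e2) (a1 * a2 * e1)) (Rmin (a1 * a2 * e2) (a1 * e1))).
 split. { repeat apply Rmin_glb_lt; apply Rmult_lt_0_compat; try apply Rmult_lt_0_compat; lra. }
 intros u Hu.
 pose proof (Rmin_l (Rmin (a2 * e2) (a1 * a2 * e1)) (Rmin (a1 * a2 * e2) (a1 * e1))).
 pose proof (Rmin_r (Rmin (a2 * e2) (a1 * a2 * e1)) (Rmin (a1 * a2 * e2) (a1 * e1))).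
 pose proof (Rmin_l (a2 * e2) (a1 * a2 * e1)). pose proof (Rmin_r (a2 * e2) (a1 * a2 * e1)).
 pose proof (Rmin_l (a1 * a2 * e2) (a1 * e1)). pose proof (Rmin_r (a1 * a2 * e2) (a1 * e1)).
 assert (Hx : 0 <= a + s * u <= 1).
 { assert (u / a2 <= e2) by (apply div_le; lra). assert (0 <= u / a2) by (apply div_ge0; lra).
   destruct (F2 (u / a2)) as [Hr Hr2]. lra.
   replace (a2 * (u / a2)) with u in Hr2 by (field; lra). rewrite <- Hr2.
   apply (i_range K iota HE); auto. }
 rewrite e_eval by auto.
 rewrite I2 by lra.
 assert (E1 : u / a2 <= a1 * e1) by (apply div_le; lra || nra).
 assert (E0 : 0 <= u / a2) by (apply div_ge0; lra).
 rewrite I1 by lra.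
 set (w := u / a2 / a1).
 assert (Ew : 0 <= w <= e2). { unfold w. split. apply div_ge0; lra. apply div_le. lra. apply div_le. lra. nra. }
 rewrite (proj2 (F2 w Ew)).
 assert (Ew2 : 0 <= a2 * w <= e1). { unfold w. replace (a2 * (u / a2 / a1)) with (u / a1) by (field; lra).
   split. apply div_ge0; lra. apply div_le; lra. }
 rewrite (proj2 (F1 _ Ew2)). unfold w. f_equal. f_equal. field. lra. Qed.
End S.

End D.
Import D.

Module E.
Import Defs.
Open Scope R_scope.
Open Scope R_scope.

Section S.
Context (K : Grp) (iota : K -> R -> R) (HE : PLO_embedding K iota).
Notation comp := (B.comp K iota).
Notation Fx := (B.Fx K iota).

Lemma ginv_smono k x y : 0 <= x -> x < y -> y <= 1 -> iota (ginv k) x < iota (ginv k) y.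
Proof. apply (i_smono K iota HE). Qed.

Lemma lower_end p : comp p p -> exists a, Fx a /\ 0 <= a < p /\ (forall y, comp p y -> a <= y) /\
   (forall c, a < c -> exists y, comp p y /\ y < c).
Proof. intros Hp. pose proof (comp_01 K iota p p Hp) as Hp01.
 destruct (completeness (fun w => comp p (- w))) as [m [Hub Hlub]].
 { exists 0. intros w Hw. pose proof (comp_01 K iota p _ Hw). lra. }
 { exists (- p). rewrite Ropp_involutive. auto. }
 set (a := - m).
 assert (Hlow : forall y, comp p y -> a <= y).
 { intros y Hy. assert (- y <= m) by (apply Hub; rewrite Ropp_involutive; auto). unfold a; lra. }
 assert (Happ : forall c, a < c -> exists y, comp p y /\ y < c).
 { intros c Hc. apply NNPP. intro N. assert (m <= - c).
   { apply Hlub. intros w Hw. destruct (Rle_dec (- w) c). destruct (Req_dec (-w) c).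
     lra. exfalso. apply N. exists (- w). split; auto. lra. lra. }
   unfold a in Hc; lra. }
 assert (Ha0 : 0 <= a). { destruct (Rle_dec 0 a); auto. destruct (Happ 0) as [y [Hy Hy0]]. lra.
   pose proof (comp_01 K iota p y Hy). lra. }
 assert (Hap : a <= p) by auto.
 assert (Hnot : forall k, ~ (a < iota k a)).
 { intros k Hk. destruct (Happ _ Hk) as [y [Hy Hyl]].
   pose proof (comp_01 K iota p y Hy).
   pose proof (i_range K iota HE k a ltac:(lra)).
   pose proof (ginv_smono k y (iota k a) ltac:(lra) Hyl ltac:(lra)).
   rewrite (i_invl K iota HE) in H1 by lra.
   pose proof (Hlow _ (comp_inv K iota HE p y (ginv k) Hy)). lra. }
 assert (HF : Fx a).
 { intro k. destruct (Rtotal_order (iota k a) a) as [h|[h|h]]; auto.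
   - exfalso. apply (Hnot (ginv k)). pose proof (i_range K iota HE k a ltac:(lra)).
     pose proof (ginv_smono k (iota k a) a ltac:(lra) h ltac:(lra)).
     rewrite (i_invl K iota HE) in H0 by lra. auto.
   - exfalso. apply (Hnot k). auto. }
 exists a. split; auto. split. split; auto. destruct (Req_dec a p). exfalso.
 apply (comp_nfx K iota p p Hp). rewrite <- H. auto. lra. split; auto. Qed.

Lemma upper_end p : comp p p -> exists b, Fx b /\ p < b <= 1 /\ (forall y, comp p y -> y <= b) /\
   (forall c, c < b -> exists y, comp p y /\ c < y).
Proof. intros Hp. pose proof (comp_01 K iota p p Hp) as Hp01.
 destruct (completeness (fun w => comp p w)) as [b [Hub Hlub]].
 { exists 1. intros w Hw. pose proof (comp_01 K iota p _ Hw). lra. }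
 { exists p. auto. }
 assert (Happ : forall c, c < b -> exists y, comp p y /\ c < y).
 { intros c Hc. apply NNPP. intro N. assert (b <= c).
   { apply Hlub. intros w Hw. destruct (Rle_dec w c). auto. exfalso. apply N. exists w. split; auto. lra. }
   lra. }
 assert (Hb1 : b <= 1). { destruct (Rle_dec b 1); auto. destruct (Happ 1) as [y [Hy Hy0]]. lra.
   pose proof (comp_01 K iota p y Hy). lra. }
 assert (Hpb : p <= b) by auto.
 assert (Hnot : forall k, ~ (iota k b < b)).
 { intros k Hk. destruct (Happ _ Hk) as [y [Hy Hyl]].
   pose proof (comp_01 K iota p y Hy).
   pose proof (i_range K iota HE k b ltac:(lra)).
   pose proof (ginv_smono k (iota k b) y ltac:(lra) Hyl ltac:(lra)).
   rewrite (i_invl K iota HE) in H1 by lra.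
   pose proof (Hub _ (comp_inv K iota HE p y (ginv k) Hy)). lra. }
 assert (HF : Fx b).
 { intro k. destruct (Rtotal_order (iota k b) b) as [h|[h|h]]; auto.
   - exfalso. apply (Hnot k). auto.
   - exfalso. apply (Hnot (ginv k)). pose proof (i_range K iota HE k b ltac:(lra)).
     pose proof (ginv_smono k b (iota k b) ltac:(lra) h ltac:(lra)).
     rewrite (i_invl K iota HE) in H0 by lra. auto. }
 exists b. split; auto. split. split; auto. destruct (Req_dec p b). exfalso.
 apply (comp_nfx K iota p p Hp). rewrite H. auto. lra. split; auto. Qed.

Lemma Cp_comm k1 k2 : Cp K iota (gmul (gmul (gmul k1 k2) (ginv k1)) (ginv k2)).
Proof. intros p Hp. pose proof (comp_01 K iota p p Hp) as Hp01.
 destruct (lower_end p Hp) as [a [Fa [Ha [Hlow Happ]]]].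
 destruct (upper_end p Hp) as [b [Fb [Hb [Hup Happ2]]]].
 destruct (comm_germ K iota HE k1 k2 a 1 ltac:(auto) (germ_right K iota HE k1 a Fa ltac:(lra))
    (germ_right K iota HE k2 a Fa ltac:(lra))) as [d1 [Hd1 E1]].
 destruct (comm_germ K iota HE k1 k2 b (-1) ltac:(auto) (germ_left K iota HE k1 b Fb ltac:(lra))
    (germ_left K iota HE k2 b Fb ltac:(lra))) as [d2 [Hd2 E2]].
 exists (Rmin (a + d1) p), (Rmax (b - d2) p).
 pose proof (Rmin_l (a + d1) p). pose proof (Rmin_r (a + d1) p).
 pose proof (Rmax_l (b - d2) p). pose proof (Rmax_r (b - d2) p).
 split.
 { assert (a < Rmin (a + d1) p) by (apply Rmin_glb_lt; lra).
   destruct (Happ _ H3) as [y [Hy Hy2]]. apply (comp_conv K iota p y p); auto. lra. }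
 split.
 { assert (Rmax (b - d2) p < b) by (apply Rmax_lub_lt; lra).
   destruct (Happ2 _ H3) as [y [Hy Hy2]]. apply (comp_conv K iota p p y); auto. lra. }
 intros x Hx Hn. pose proof (Hlow x Hx). pose proof (Hup x Hx). split.
 - destruct (Rle_dec (Rmin (a + d1) p) x); auto. exfalso. apply Hn.
   replace x with (a + 1 * (x - a)) by ring. apply E1. lra.
 - destruct (Rle_dec x (Rmax (b - d2) p)); auto. exfalso. apply Hn.
   replace x with (b + -1 * (b - x)) by ring. apply E2. lra. Qed.
End S.

End E.
Import E.

Module GL.
Import Defs.
Open Scope R_scope.

Section S.
Context (G : Grp).
Implicit Types x y z a b g : G.

Lemma mul_cancel_r x y z : gmul x z = gmul y z -> x = y.
Proof. intro H. rewrite <- (gmul_1r _ x), <- (gmul_1r _ y), <- (gmul_Vr _ z), !gmul_assoc, H. auto. Qed.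

Lemma inv_unique y x : gmul y x = gone -> y = ginv x.
Proof. intro H. apply (mul_cancel_r _ _ x). rewrite H, gmul_Vl. auto. Qed.

Lemma inv_one : ginv (@gone G) = gone.
Proof. symmetry. apply inv_unique. apply gmul_1l. Qed.

Lemma inv_inv a : ginv (ginv a) = a.
Proof. symmetry. apply inv_unique. apply gmul_Vr. Qed.

Lemma inv_mul a b : ginv (gmul a b) = gmul (ginv b) (ginv a).
Proof. symmetry. apply inv_unique. rewrite <- !gmul_assoc. rewrite (gmul_assoc _ (ginv a) a b), gmul_Vl, gmul_1l, gmul_Vl. auto. Qed.

Lemma comm_of x y : gmul (gmul (gmul x y) (ginv x)) (ginv y) = gone -> gmul x y = gmul y x.
Proof. intro H. apply inv_unique in H. rewrite inv_inv in H.
 apply (mul_cancel_r _ _ (ginv x)). rewrite H, <- gmul_assoc, gmul_Vr, gmul_1r. auto. Qed.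

Definition cj g a := gmul (gmul g a) (ginv g).

Lemma cj_mul g a b : gmul (cj g a) (cj g b) = cj g (gmul a b).
Proof. unfold cj. rewrite !gmul_assoc. rewrite <- (gmul_assoc _ (gmul g a) (ginv g) g), gmul_Vl, gmul_1r. auto. Qed.

Lemma cj_inv g a : ginv (cj g a) = cj g (ginv a).
Proof. unfold cj. rewrite !inv_mul, inv_inv, gmul_assoc. auto. Qed.

Lemma cj_one g : cj g gone = gone.
Proof. unfold cj. rewrite gmul_1r, gmul_Vr. auto. Qed.

Definition cm x y := gmul x y = gmul y x.

Lemma cm_one b : cm gone b.
Proof. unfold cm. rewrite gmul_1l, gmul_1r. auto. Qed.

Lemma cm_mul x y b : cm x b -> cm y b -> cm (gmul x y) b.
Proof. unfold cm. intros H1 H2. rewrite <- gmul_assoc, H2, gmul_assoc, H1, <- gmul_assoc. auto. Qed.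

Lemma cm_inv x b : cm x b -> cm (ginv x) b.
Proof. unfold cm. intros H.
 transitivity (gmul (gmul (ginv x) (gmul b x)) (ginv x)).
 - rewrite <- !gmul_assoc, gmul_Vr, gmul_1r. auto.
 - rewrite <- H, gmul_assoc, gmul_Vl, gmul_1l. auto. Qed.

Lemma cm_sym x y : cm x y -> cm y x.
Proof. unfold cm; auto. Qed.

End S.

Lemma hom_one (K G : Grp) (f : K -> G) : is_hom K G f -> f gone = gone.
Proof. intro H. apply (mul_cancel_r G _ _ (f gone)). rewrite <- H, !gmul_1l. auto. Qed.

Lemma hom_inv (K G : Grp) (f : K -> G) k : is_hom K G f -> f (ginv k) = ginv (f k).
Proof. intro H. apply inv_unique. rewrite <- H, gmul_Vl. apply hom_one; auto. Qed.

End GL.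
Import GL.

Module F.
Import Defs.
Open Scope R_scope.
Open Scope R_scope.

Section S.
Context (K : Grp) (iota : K -> R -> R) (HE : PLO_embedding K iota).
Notation comp := (B.comp K iota).
Notation Fx := (B.Fx K iota).

Definition MP (P : list R) (k : K) := Cp K iota k /\
  forall x, 0 <= x <= 1 -> iota k x <> x -> exists p, In p P /\ comp p x.

Lemma supp_inv a x : 0 <= x <= 1 -> iota (ginv a) x <> x -> iota a x <> x.
Proof. intros Hx Hn e. apply Hn. rewrite <- e at 1. rewrite (i_invl K iota HE); auto. Qed.

Lemma MP_one P : MP P gone.
Proof. split. apply (Cp_one K iota HE). intros x Hx Hn. exfalso. apply Hn. apply (i_one K iota HE); auto. Qed.

Lemma MP_mul P a b : MP P a -> MP P b -> MP P (gmul a b).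
Proof. intros [Ca Sa] [Cb Sb]. split. apply (Cp_mul K iota HE); auto.
 intros x Hx Hn. rewrite (i_mul K iota HE) in Hn by auto.
 destruct (Req_dec (iota b x) x) as [e|e]. rewrite e in Hn. auto. auto. Qed.

Lemma MP_inv P a : MP P a -> MP P (ginv a).
Proof. intros [Ca Sa]. split. apply (Cp_inv K iota HE); auto.
 intros x Hx Hn. apply Sa; auto. apply supp_inv; auto. Qed.

Lemma MP_conj P g a : MP P a -> MP P (gmul (gmul g a) (ginv g)).
Proof. intros [Ca Sa]. split. apply (Cp_conj K iota HE); auto.
 intros x Hx Hn. set (y := iota (ginv g) x).
 assert (Hy01 : 0 <= y <= 1) by (apply (i_range K iota HE); auto).
 assert (Hxy : x = iota g y) by (unfold y; rewrite (i_invr K iota HE); auto).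
 rewrite !(i_mul K iota HE) in Hn by (auto; apply (i_range K iota HE); auto).
 fold y in Hn. rewrite Hxy in Hn.
 assert (iota a y <> y). { intro e. rewrite e in Hn. auto. }
 destruct (Sa y Hy01 H) as [p [Hp Hc]]. exists p. split; auto. rewrite Hxy.
 apply (comp_inv K iota HE); auto. Qed.

Lemma MP_nil k : MP nil k -> k = gone.
Proof. intros [_ S]. apply (i_ext K iota HE). intros x Hx. rewrite (i_one K iota HE) by auto.
 destruct (Req_dec (iota k x) x); auto. destruct (S x Hx H) as [p [[] _]]. Qed.

Lemma core p0 c d g ka kb : comp p0 c -> comp p0 d -> d < iota g c ->
  (forall x, comp p0 x -> iota ka x <> x -> c <= x <= d) ->
  (forall x, comp p0 x -> iota kb x <> x -> c <= x <= d) ->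
  forall x, comp p0 x ->
   iota (gmul (gmul (gmul (cj K g ka) kb) (ginv (cj K g ka))) (ginv kb)) x = x.
Proof. intros Hc Hd Hg Ha Hb.
 set (a' := cj K g ka).
 assert (Dis : forall u, comp p0 u -> iota a' u <> u -> iota kb u = u).
 { intros u Hu Hn. pose proof (comp_01 K iota p0 u Hu) as Hu01.
   set (y := iota (ginv g) u).
   assert (Hy01 : 0 <= y <= 1) by (apply (i_range K iota HE); auto).
   assert (Hxy : u = iota g y) by (unfold y; rewrite (i_invr K iota HE); auto).
   unfold a', cj in Hn.
   rewrite !(i_mul K iota HE) in Hn by (auto; apply (i_range K iota HE); auto).
   fold y in Hn. rewrite Hxy in Hn.
   assert (iota ka y <> y). { intro e. rewrite e in Hn. auto. }
   assert (comp p0 y) by (unfold y; apply (comp_inv K iota HE); auto).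
   destruct (Ha y H0 H). pose proof (comp_01 K iota p0 c Hc).
   assert (iota g c <= u) by (rewrite Hxy; apply (i_mono K iota HE); lra).
   destruct (Req_dec (iota kb u) u); auto. destruct (Hb u Hu H5). lra. }
 assert (Cm : forall u, comp p0 u -> iota a' (iota kb u) = iota kb (iota a' u)).
 { intros u Hu. pose proof (comp_01 K iota p0 u Hu) as Hu01.
   destruct (Req_dec (iota a' u) u) as [e|e].
   - rewrite e. destruct (Req_dec (iota kb u) u) as [e2|e2]. rewrite e2; auto.
     destruct (Req_dec (iota a' (iota kb u)) (iota kb u)) as [e3|e3]. auto.
     exfalso. assert (comp p0 (iota kb u)) by (apply (comp_inv K iota HE); auto).
     pose proof (Dis _ H e3). apply e2. apply (i_inj K iota HE kb); auto.
     apply (i_range K iota HE); auto.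
   - rewrite (Dis u Hu e).
     assert (comp p0 (iota a' u)) by (apply (comp_inv K iota HE); auto).
     destruct (Req_dec (iota a' (iota a' u)) (iota a' u)) as [e3|e3].
     + exfalso. apply e. apply (i_inj K iota HE a'); auto. apply (i_range K iota HE); auto.
     + rewrite (Dis _ H e3). auto. }
 intros x Hx. pose proof (comp_01 K iota p0 x Hx) as Hx01.
 rewrite (e_eval K iota HE) by auto.
 set (z := iota (ginv a') (iota (ginv kb) x)).
 assert (Hz : comp p0 z) by (unfold z; apply (comp_inv K iota HE); apply (comp_inv K iota HE); auto).
 rewrite Cm by auto. unfold z. rewrite (i_invr K iota HE).
 rewrite (i_invr K iota HE); auto. apply (i_range K iota HE); auto. Qed.

End S.

End F.
Import F.

Open Scope R_scope.

Lemma min_nat (Q : nat -> Prop) n : Q n -> exists m, Q m /\ forall m', Q m' -> (m <= m')%nat.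
Proof. revert n. induction n as [n IH] using (well_founded_induction lt_wf). intros Hn.
 destruct (classic (exists m', Q m' /\ (m' < n)%nat)) as [[m' [Hm' Hlt]]|Hno].
 - apply (IH m'); auto.
 - exists n. split; auto. intros m' Hm'. destruct (Nat.lt_ge_cases m' n); auto. exfalso. apply Hno; eauto. Qed.

Theorem lemma4p7 (G : Grp) :
  fin_gen_group G -> in_QPLO G -> (exists g : G, g <> gone) ->
  exists H : G -> Prop,
    is_normal G H /\ (exists h, H h /\ h <> gone) /\
    forall A B : G -> Prop,
      is_subgroup G A -> is_subgroup G B ->
      (forall a, A a -> H a) -> (forall b, B b -> H b) ->
      fin_gen_subgroup G A -> fin_gen_subgroup G B ->
      exists g : G, conj_centralize G g A B.
Proof.
 intros _ [K [pi [[iota HE] [Hhom Hsurj]]]] Hnt.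
 destruct (classic (forall x y : G, gmul x y = gmul y x)) as [Hab|Hnab].
 { exists (fun _ => True). split. split. split; auto. split; auto. intros; auto. split.
   destruct Hnt as [g Hg]. exists g; auto.
   intros A B _ _ _ _ _ _. exists gone. intros a b _ _. rewrite inv_one, gmul_1l, gmul_1r. apply Hab. }
 assert (Hex : exists x y : G, gmul x y <> gmul y x).
 { apply NNPP; intro N. apply Hnab. intros x y. apply NNPP. intro N2. apply N. eauto. }
 destruct Hex as [x [y Hxy]].
 destruct (Hsurj x) as [k1 Hk1]. destruct (Hsurj y) as [k2 Hk2].
 set (e := gmul (gmul (gmul k1 k2) (ginv k1)) (ginv k2)).
 assert (Hpe : pi e <> gone).
 { intro H. apply Hxy. apply comm_of. unfold e in H. rewrite !Hhom, !(hom_inv K G pi) in H by auto.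
   rewrite Hk1, Hk2 in H. auto. }
 destruct (cover K iota HE e) as [P0 HP0].
 set (Q := fun n => exists P, length P = n /\ exists k, MP K iota P k /\ pi k <> gone).
 destruct (min_nat Q (length P0)) as [m [[P [HPl [k0 [Hk0 Hpk0]]]] Hmin]].
 { exists P0. split; auto. exists e. split; auto. split; auto. apply (Cp_comm K iota HE). }
 destruct P as [|p0 P'].
 { exfalso. apply Hpk0. rewrite (MP_nil K iota HE k0 Hk0). apply (hom_one K G pi); auto. }
 assert (HP' : forall k, MP K iota P' k -> pi k = gone).
 { intros k Hk. apply NNPP. intro N. assert (Q (length P')) by (exists P'; eauto).
   apply Hmin in H. simpl in HPl. lia. }
 assert (Hp0 : B.comp K iota p0 p0).
 { apply NNPP. intro N. apply Hpk0. apply HP'. destruct Hk0 as [C0 S0]. split; auto.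
   intros x0 Hx Hn. destruct (S0 x0 Hx Hn) as [p [[<-|Hin] Hc]].
   exfalso. apply N. apply (comp_pp K iota HE p0 x0); auto. eauto. }
 set (H := fun z : G => exists k, MP K iota (p0 :: P') k /\ pi k = z).
 exists H. split.
 { split. split. exists gone. split. apply (MP_one K iota HE). apply (hom_one K G pi); auto.
   split. intros a b [ka [Ha <-]] [kb [Hb <-]]. exists (gmul ka kb). split. apply (MP_mul K iota HE); auto. auto.
   intros a [ka [Ha <-]]. exists (ginv ka). split. apply (MP_inv K iota HE); auto. apply (hom_inv K G pi); auto.
   intros g h [kh [Hh <-]]. destruct (Hsurj g) as [kg <-]. exists (gmul (gmul kg kh) (ginv kg)).
   split. apply (MP_conj K iota HE); auto. rewrite !Hhom, (hom_inv K G pi); auto. }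
 split. { exists (pi k0). split; auto. exists k0; auto. }
 intros A B HA HB HAH HBH [lA HlA] [lB HlB].
 assert (Hgen : forall z, In z (lA ++ lB) -> H z).
 { intros z Hz. apply in_app_or in Hz. destruct Hz as [Hz|Hz].
   - apply HAH. apply HlA. intros S _ HS. apply HS; auto.
   - apply HBH. apply HlB. intros S _ HS. apply HS; auto. }
 assert (Hbound : forall L, (forall z, In z L -> H z) -> exists c d, B.comp K iota p0 c /\ B.comp K iota p0 d /\ c <= d /\
   forall z, In z L -> exists k, MP K iota (p0 :: P') k /\ pi k = z /\
     forall x, B.comp K iota p0 x -> iota k x <> x -> c <= x <= d).
 { induction L as [|z L IH]; intros HL.
   - exists p0, p0. split; auto. split; auto. split. lra. intros z [].
   - destruct IH as [c [d [Hc [Hd [Hcd HL']]]]]. intros; apply HL; right; auto.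
     destruct (HL z (or_introl eq_refl)) as [k [Hk <-]].
     destruct ((proj1 Hk) p0 Hp0) as [c1 [d1 [Hc1 [Hd1 Hq1]]]].
     exists (Rmin c c1), (Rmax d d1).
     pose proof (Rmin_l c c1). pose proof (Rmin_r c c1). pose proof (Rmax_l d d1). pose proof (Rmax_r d d1).
     split. unfold Rmin; destruct (Rle_dec c c1); auto.
     split. unfold Rmax; destruct (Rle_dec d d1); auto.
     split. lra.
     intros w [<-|Hw].
     + exists k. split; auto. split; auto. intros x0 Hx Hn. destruct (Hq1 x0 Hx Hn). lra.
     + destruct (HL' w Hw) as [k' [Hk' [Hpk' Hs]]]. exists k'. split; auto. split; auto.
       intros x0 Hx Hn. destruct (Hs x0 Hx Hn). lra. }
 destruct (Hbound _ Hgen) as [c [d [Hc [Hd [Hcd Hall]]]]].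
 destruct (displace K iota HE p0 c d Hc Hd Hcd) as [g Hg].
 exists (pi g).
 assert (Key : forall a b, In a lA -> In b lB -> cm G (cj G (pi g) a) b).
 { intros a b Ha Hb.
   destruct (Hall a (in_or_app _ _ _ (or_introl Ha))) as [ka [Hka [<- Ska]]].
   destruct (Hall b (in_or_app _ _ _ (or_intror Hb))) as [kb [Hkb [<- Skb]]].
   set (ee := gmul (gmul (gmul (cj K g ka) kb) (ginv (cj K g ka))) (ginv kb)).
   assert (Mee : MP K iota P' ee).
   { assert (Ma : MP K iota (p0 :: P') (cj K g ka)) by (apply (MP_conj K iota HE); auto).
     assert (M2 : MP K iota (p0 :: P') ee).
     { unfold ee. apply (MP_mul K iota HE). apply (MP_mul K iota HE). apply (MP_mul K iota HE); auto.
       apply (MP_inv K iota HE); auto. apply (MP_inv K iota HE); auto. }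
     destruct M2 as [C2 S2]. split; auto. intros x0 Hx Hn.
     destruct (S2 x0 Hx Hn) as [p [[<-|Hin] Hcp]].
     - exfalso. apply Hn. apply (core K iota HE p0 c d g ka kb); auto.
     - eauto. }
   apply HP' in Mee. unfold ee in Mee. apply comm_of.
   rewrite !Hhom, !(hom_inv K G pi) in Mee by auto. unfold cj in *. rewrite !Hhom, (hom_inv K G pi) in Mee by auto.
   auto. }
 intros a b Ha Hb. apply HlA in Ha. apply HlB in Hb.
 change (cm G (cj G (pi g) a) b).
 revert b Hb. pattern a. apply Ha.
 - split. intros b _. unfold cj. rewrite gmul_1r, gmul_Vr. apply cm_one.
   split. intros a1 a2 H1 H2 b Hb. rewrite <- cj_mul. apply cm_mul; auto.
   intros a1 H1 b Hb. rewrite <- cj_inv. apply cm_inv; auto.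
 - intros a1 Ha1 b Hb. apply cm_sym. pattern b. apply Hb.
   + split. apply cm_one. split. intros b1 b2 H1 H2. apply cm_mul; auto.
     intros b1 H1. apply cm_inv; auto.
   + intros b1 Hb1. apply cm_sym. apply Key; auto.
Qed.
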